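(* Let $p\colon X\to B_1$ and $q\colon Y\to B_2$ be Boolean sets with binary meets and let $\varphi\colon X\to Y$ be a morphism of Boolean sets. Then $\varphi$ preserves binary meets if and only if the relational covering morphism $\hat\varphi\colon Y^{\ast}\to X^{\ast}$ (where $\hat\varphi(G)$ is the set of ultrafilters $H$ of $X$ with $H\subseteq\varphi^{-1}(G)$) is a partial map, i.e. $|\hat\varphi(G)|\le 1$ for every ultrafilter $G$ of $Y$.
   Context: Convention: a ''Boolean algebra'' means a generalized Boolean algebra (relatively complemented distributive lattice with $0$); morphisms preserve lattice operations, $0$ and relative complements. Boolean set: a presheaf of sets $p\colon X\to B$ over a Boolean algebra $B$ (pairwise disjoint $X_e$, restriction maps $x\mapsto x|^e_f$ for $e\ge f$ with $|^e_e=\mathrm{id}$, $(x|^e_f)|^f_g=x|^e_g$) with all $X_e\ne\emptyset$, such that under the order $x\le y$ iff $p(x)\le p(y)$ and $x=y|^{p(y)}_{p(x)}$ there is a least element $0$, compatible pairs ($x\wedge y$ exists and $p(x\wedge y)=p(x)\wedge p(y)$) have joins, and $p(x)=0\Rightarrow x=0$. It has binary meets if $x\wedge y$ exists for all $x,y$. A morphism of Boolean sets is $\varphi\colon X\to Y$ with a Boolean algebra morphism $\overline{\varphi}\colon B_1\to B_2$ such that $q\varphi=\overline{\varphi}p$ and $\varphi(x|^a_b)=\varphi(x)|^{\overline{\varphi}(a)}_{\overline{\varphi}(b)}$; it preserves binary meets if $\varphi(x\wedge y)=\varphi(x)\wedge\varphi(y)$. Dual étalé spaces: $X^{\ast}$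 (resp. $Y^{\ast}$) is the set of ultrafilters (maximal proper non-empty down-directed upward-closed subsets) of $X$ (resp. $Y$), topologized by the basis $L(a)=\{G: a\in G\}$, projecting to the ultrafilter spaces of $B_1$, $B_2$ via $G\mapsto p(G)$ (resp. $q(G)$). The map $\hat\varphi$ has underlying map $F\mapsto\overline{\varphi}^{-1}(F)$ on ultrafilters of $B_2$. *)

(* Defs.v *)
(* generalized Boolean algebras are cbDistrLatticeType
   (sectionally complemented distributive lattices with bottom). *)
From HB Require Import structures.
From mathcomp Require Import all_boot all_order.
Set Implicit Arguments. Unset Strict Implicit. Unset Printing Implicit Defensive.
Import Order.Theory.
Local Open Scope order_scope.

Definition ba_morphism d1 (B1 : cbDistrLatticeType d1) d2 (B2 : cbDistrLatticeType d2)
  (f : B1 -> B2) : Prop :=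
  (forall a b, f (a `&` b) = f a `&` f b) /\
  (forall a b, f (a `|` b) = f a `|` f b) /\
  f \bot = \bot /\
  (forall a b, f (a `\` b) = f a `\` f b).

Section BooleanSets.
Variables (d : Order.disp_t) (B : cbDistrLatticeType d) (X : Type).
Variables (p : X -> B) (res : X -> B -> X).
(* res x f stands for x|^{p x}_f (only meaningful for f <= p x). *)

Definition bs_le (x y : X) : Prop := p x <= p y /\ x = res y (p x).

Definition bs_is_meet (x y m : X) : Prop :=
  bs_le m x /\ bs_le m y /\ (forall z, bs_le z x -> bs_le z y -> bs_le z m).

Definition bs_is_join (x y j : X) : Prop :=
  bs_le x j /\ bs_le y j /\ (forall z, bs_le x z -> bs_le y z -> bs_le j z).

Definition is_boolean_set : Prop :=
  (* presheaf axioms *)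
  (forall x, res x (p x) = x) /\
  (forall x f, f <= p x -> p (res x f) = f) /\
  (forall x f g, g <= f -> f <= p x -> res (res x f) g = res x g) /\
  (forall e : B, exists x, p x = e) /\
  (exists z, (forall x, bs_le z x) /\ (forall x, p x = \bot -> x = z)) /\
  (* compatible pairs have joins *)
  (forall x y m, bs_is_meet x y m -> p m = p x `&` p y ->
     exists j, bs_is_join x y j).

Definition has_binary_meets : Prop := forall x y, exists m, bs_is_meet x y m.

Definition bs_is_filter (F : X -> Prop) : Prop :=
  (exists x, F x) /\
  (forall x y, F x -> bs_le x y -> F y) /\
  (forall x y, F x -> F y -> exists z, F z /\ bs_le z x /\ bs_le z y) /\
  (exists x, ~ F x).

Definition bs_is_ultrafilter (F : X -> Prop) : Prop :=
  bs_is_filter F /\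
  (forall F', bs_is_filter F' -> (forall x, F x -> F' x) -> forall x, F' x -> F x).

End BooleanSets.

Definition bs_morphism d1 (B1 : cbDistrLatticeType d1) (X : Type)
  (p : X -> B1) (resX : X -> B1 -> X)
  d2 (B2 : cbDistrLatticeType d2) (Y : Type) (q : Y -> B2) (resY : Y -> B2 -> Y)
  (phi : X -> Y) (phibar : B1 -> B2) : Prop :=
  ba_morphism phibar /\
  (forall x, q (phi x) = phibar (p x)) /\
  (forall x b, b <= p x -> phi (resX x b) = resY (phi x) (phibar b)).

Definition preserves_binary_meets d1 (B1 : cbDistrLatticeType d1) (X : Type)
  (p : X -> B1) (resX : X -> B1 -> X)
  d2 (B2 : cbDistrLatticeType d2) (Y : Type) (q : Y -> B2) (resY : Y -> B2 -> Y)
  (phi : X -> Y) : Prop :=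
  forall x y m, bs_is_meet p resX x y m -> bs_is_meet q resY (phi x) (phi y) (phi m).

Definition phi_hat d1 (B1 : cbDistrLatticeType d1) (X : Type)
  (p : X -> B1) (resX : X -> B1 -> X) (Y : Type)
  (phi : X -> Y) (G : Y -> Prop) (H : X -> Prop) : Prop :=
  bs_is_ultrafilter p resX H /\ (forall x, H x -> G (phi x)).

(* Main.v *)
Require Import Defs.
From mathcomp Require Import all_boot all_order.
From mathcomp Require Import classical_sets.
From Stdlib Require Import Classical FunctionalExtensionality PropExtensionality.
Set Implicit Arguments. Unset Strict Implicit. Unset Printing Implicit Defensive.
Import Order.Theory.
Local Open Scope order_scope.

Section BS.
Variables (d : Order.disp_t) (B : cbDistrLatticeType d) (X : Type).
Variables (p : X -> B) (res : X -> B -> X).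
Hypothesis HB : is_boolean_set p res.

Lemma res_id x : res x (p x) = x.
Proof. by case: HB. Qed.
Lemma p_res x f : f <= p x -> p (res x f) = f.
Proof. by case: HB => _ [H _]; apply: H. Qed.
Lemma res_res x f g : g <= f -> f <= p x -> res (res x f) g = res x g.
Proof. by case: HB => _ [_ [H _]]; apply: H. Qed.

Lemma bsle_refl x : bs_le p res x x.
Proof. by split; [exact: lexx | rewrite res_id]. Qed.

Lemma bsle_trans x y z : bs_le p res x y -> bs_le p res y z -> bs_le p res x z.
Proof.
move=> [pxy ex] [pyz ey]; split; first exact: le_trans pxy pyz.
by rewrite {1}ex {1}ey res_res.
Qed.

Lemma bsle_p x y : bs_le p res x y -> p x <= p y.
Proof. by case. Qed.

Lemma res_bsle x b : b <= p x -> bs_le p res (res x b) x.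
Proof. by move=> bx; split; rewrite p_res. Qed.

Lemma bsle_res t x b : bs_le p res t x -> p t <= b -> b <= p x ->
  bs_le p res t (res x b).
Proof.
move=> [ptx et] ptb bpx; split; first by rewrite p_res.
by rewrite res_res.
Qed.

Lemma zero_ex : exists z, (forall x, bs_le p res z x) /\
  (forall x, p x = \bot -> x = z) /\ p z = \bot.
Proof.
case: HB => _ [_ [_ [fib [[z [zl zb]] _]]]].
exists z; split; first done; split; first done.
have [x px] := fib \bot.
apply/eqP; rewrite -lex0 -px; exact: bsle_p.
Qed.

Lemma filter_no_zero F z : bs_is_filter p res F ->
  (forall x, bs_le p res z x) -> ~ F z.
Proof.
move=> [_ [up [_ [y ny]]]] zl Fz; apply: ny; exact: up _ _ Fz (zl y).
Qed.
Lemma prime_aux G v c : bs_is_ultrafilter p res G -> G v -> c <= p v ->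
  ~ G (res v c) ->
  exists g, G g /\ bs_le p res g v /\ p g `&` c = \bot.
Proof.
move=> [[[x0 Gx0] [Gup [Gdir Gpr]]] Gmax] Gv cv nG.
apply: NNPP => nex.
have hne g : G g -> bs_le p res g v -> p g `&` c <> \bot.
  by move=> Gg gv e; apply: nex; exists g.
have [z [zl [zb pz]]] := zero_ex.
pose K y := exists g, G g /\ bs_le p res g v /\ bs_le p res (res g (p g `&` c)) y.
have pK g : p (res g (p g `&` c)) = p g `&` c by rewrite p_res // leIl.
have Kf : bs_is_filter p res K.
  split; first by exists (res v (p v `&` c)); exists v; split=> //; split;
    [exact: bsle_refl | exact: bsle_refl].
  split; first by move=> a b [g [Gg [gv ga]]] ab; exists g; split; first done; split; first done;
    exact: bsle_trans ga ab.
  split.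
    move=> a b [g1 [Gg1 [g1v g1a]]] [g2 [Gg2 [g2v g2b]]].
    have [g [Gg [gg1 gg2]]] := Gdir _ _ Gg1 Gg2.
    have gv : bs_le p res g v by exact: bsle_trans gg1 g1v.
    exists (res g (p g `&` c)); split; first by exists g; split; first done; split; first done;
      exact: bsle_refl.
    have tg : bs_le p res (res g (p g `&` c)) g by apply: res_bsle; rewrite leIl.
    split.
      apply: bsle_trans g1a; apply: bsle_res.
      - exact: bsle_trans tg gg1.
      - by rewrite pK; apply: leI2 => //; exact: bsle_p.
      - exact: leIl.
    apply: bsle_trans g2b; apply: bsle_res.
    - exact: bsle_trans tg gg2.
    - by rewrite pK; apply: leI2 => //; exact: bsle_p.
    - exact: leIl.
  exists z => [[g [Gg [gv gz]]]].
  apply: (hne g Gg gv); apply/eqP; rewrite -lex0 -pK -pz; exact: bsle_p.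
have GK y : G y -> K y.
  move=> Gy; have [g [Gg [gy gv]]] := Gdir _ _ Gy Gv.
  exists g; split; first done; split; first done; apply: bsle_trans gy.
  by apply: res_bsle; rewrite leIl.
apply: nG; apply: (Gmax K Kf GK).
exists v; split => //; split; first exact: bsle_refl.
by rewrite (meet_idPr cv); exact: bsle_refl.
Qed.

Lemma prime G v b : bs_is_ultrafilter p res G -> G v -> b <= p v ->
  ~ G (res v b) -> G (res v (p v `\` b)).
Proof.
move=> GU Gv bv nGb; apply: NNPP => nGc.
have [g1 [Gg1 [g1v e1]]] := prime_aux GU Gv bv nGb.
have [g2 [Gg2 [g2v e2]]] := prime_aux GU Gv (leBx _ _) nGc.
case: (GU) => [[_ [Gup [Gdir Gpr]]] _].
have [g [Gg [gg1 gg2]]] := Gdir _ _ Gg1 Gg2.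
have [z [zl [zb pz]]] := zero_ex.
have pg1 := bsle_p gg1; have pg2 := bsle_p gg2.
have pgv : p g <= p v by apply: le_trans pg1 (bsle_p g1v).
have h1 : p g `&` b = \bot.
  apply/eqP; rewrite -lex0 -e1; exact: leI2.
have h2 : p g `\` b = \bot.
  apply/eqP; rewrite -lex0 -e2; rewrite lexI; apply/andP; split.
    exact: le_trans (leBx _ _) pg2.
  exact: leBl.
have : p g = \bot by rewrite -(joinIB b (p g)) h1 h2 joinx0.
move=> /zb gz; apply: (filter_no_zero (proj1 GU) zl); by rewrite -gz.
Qed.
Lemma ultra_exists w : p w <> \bot ->
  exists G, bs_is_ultrafilter p res G /\ G w.
Proof.
move=> pw.
have [z [zl [zb pz]]] := zero_ex.
pose P := fun A : set X => (forall a b, A a -> bs_le p res a b -> A b) /\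
  (forall a b, A a -> A b -> exists c, A c /\ bs_le p res c a /\ bs_le p res c b) /\
  ~ A z /\ (forall a, A a -> A w).
have [|A [[Aup [Adir [Az Aw]]] Amax]] := @Zorn_bigcup X P.
  move=> F FP Ftot; split.
    move=> a b [i Fi ia] ab; exists i => //; have [up _] := FP i Fi; exact: up ia ab.
  split.
    move=> a b [i Fi ia] [j Fj jb].
    have [ij|ji] := Ftot i j Fi Fj.
      have [_ [dir _]] := FP j Fj.
      have [c [jc [ca cb]]] := dir a b (ij a ia) jb.
      by exists c; split => //; exists j.
    have [_ [dir _]] := FP i Fi.
    have [c [ic [ca cb]]] := dir a b ia (ji b jb).
    by exists c; split => //; exists i.
  split.
    by move=> [i Fi iz]; have [_ [_ [nz _]]] := FP i Fi; exact: nz.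
  by move=> a [i Fi ia]; exists i => //; have [_ [_ [_ h]]] := FP i Fi; exact: h ia.
have Ew : A w.
  apply: NNPP => nAw.
  pose U := fun y => bs_le p res w y.
  apply: (Amax U).
    split; first by move=> y Ay; exfalso; exact: nAw (Aw _ Ay).
    by move=> UA; apply: nAw; apply: UA; exact: bsle_refl.
  split; first by move=> a b; exact: bsle_trans.
  split; first by move=> a b ua ub; exists w; split; [exact: bsle_refl|].
  split; last by move=> _ _; exact: bsle_refl.
  move=> wz; apply: pw; apply/eqP; rewrite -lex0 -pz; exact: bsle_p.
have Af : bs_is_filter p res A.
  split; first by exists w.
  split; first done; split; first done; by exists z.
exists A; split => //; split => // F' F'f AF'.
apply: NNPP => nsub.
apply: (Amax F').
  split => // sub; apply: nsub => x; exact: sub.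
have [_ [up [dir _]]] := F'f.
split; first done; split; first done; split; first exact: filter_no_zero F'f zl.
by move=> _ _; exact: AF'.
Qed.
End BS.

Section M.
Variables (d1 : Order.disp_t) (B1 : cbDistrLatticeType d1) (X : Type)
  (p : X -> B1) (resX : X -> B1 -> X)
  (d2 : Order.disp_t) (B2 : cbDistrLatticeType d2) (Y : Type) (q : Y -> B2) (resY : Y -> B2 -> Y)
  (phi : X -> Y) (phibar : B1 -> B2).
Hypotheses (HX : is_boolean_set p resX) (HY : is_boolean_set q resY)
  (Hphi : bs_morphism p resX q resY phi phibar).

Lemma pb_meet a b : phibar (a `&` b) = phibar a `&` phibar b.
Proof. by case: Hphi => [[h _] _]. Qed.
Lemma pb_bot : phibar \bot = \bot.
Proof. by case: Hphi => [[_ [_ [h _]]] _]. Qed.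
Lemma pb_diff a b : phibar (a `\` b) = phibar a `\` phibar b.
Proof. by case: Hphi => [[_ [_ [_ h]]] _]. Qed.
Lemma qphi x : q (phi x) = phibar (p x).
Proof. by case: Hphi => [_ [h _]]. Qed.
Lemma phires x b : b <= p x -> phi (resX x b) = resY (phi x) (phibar b).
Proof. by case: Hphi => [_ [_ h]]; apply: h. Qed.

Lemma pb_le a b : a <= b -> phibar a <= phibar b.
Proof. by move/meet_idPl => e; apply/meet_idPl; rewrite -pb_meet e. Qed.

Lemma phi_le x y : bs_le p resX x y -> bs_le q resY (phi x) (phi y).
Proof.
move=> [pxy ex]; split; first by rewrite !qphi pb_le.
by rewrite qphi {1}ex phires.
Qed.

Lemma phi_zero zX zY : (forall x, bs_le p resX zX x) ->
  (forall y, q y = \bot -> y = zY) -> phi zX = zY.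
Proof.
move=> zl zb; apply: zb; rewrite qphi.
have [z [_ [_ pz]]] := zero_ex HX.
have : p zX = \bot by apply/eqP; rewrite -lex0 -pz; apply: bsle_p (zl z).
by move=> ->; rewrite pb_bot.
Qed.

Lemma dir1 (mX : has_binary_meets p resX) :
  preserves_binary_meets p resX q resY phi ->
  forall G, bs_is_filter q resY G ->
  forall H1 H2, phi_hat p resX phi G H1 -> phi_hat p resX phi G H2 ->
  forall h, H1 h -> H2 h.
Proof.
move=> pres G Gf H1 H2 [[[[a1 H1a1] [H1up [H1dir _]]] _] H1G]
  [[[[a2 H2a2] [H2up [H2dir H2pr]]] H2max] H2G].
have [zX [zXl [zXb pzX]]] := zero_ex HX.
have [zY [zYl [zYb pzY]]] := zero_ex HY.
have [_ [Gup [Gdir _]]] := Gf.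
pose K y := exists x1 x2 m, H1 x1 /\ H2 x2 /\ bs_is_meet p resX x1 x2 m /\
  bs_le p resX m y.
have Kf : bs_is_filter p resX K.
  split.
    have [m mm] := mX a1 a2; exists m, a1, a2, m; split; first done; split; first done; split; first done.
    exact: bsle_refl.
  split.
    move=> a b [x1 [x2 [m [h1 [h2 [mm ma]]]]]] ab.
    exists x1, x2, m; split; first done; split; first done; split; first done.
    exact: (bsle_trans HX ma ab).
  split.
    move=> a b [x1 [x2 [m [h1 [h2 [mm ma]]]]]] [x1' [x2' [m' [h1' [h2' [mm' mb]]]]]].
    have [y1 [Hy1 [y11 y11']]] := H1dir _ _ h1 h1'.
    have [y2 [Hy2 [y22 y22']]] := H2dir _ _ h2 h2'.
    have [n nn] := mX y1 y2.
    have [n1 [n2 _]] := nn.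
    exists n; split; first by exists y1, y2, n; split; first done; split; first done; split; first done; exact: (bsle_refl HX).
    have [_ [_ mu]] := mm; have [_ [_ mu']] := mm'.
    split.
      apply: (bsle_trans HX _ ma); apply: mu.
        exact: (bsle_trans HX n1 y11).
      exact: (bsle_trans HX n2 y22).
    apply: (bsle_trans HX _ mb); apply: mu'.
      exact: (bsle_trans HX n1 y11').
    exact: (bsle_trans HX n2 y22').
  exists zX => [[x1 [x2 [m [h1 [h2 [mm mz]]]]]]].
  have em : m = zX by apply: zXb; apply/eqP; rewrite -lex0 -pzX; exact: bsle_p mz.
  have [t [Gt [t1 t2]]] := Gdir _ _ (H1G _ h1) (H2G _ h2).
  have [_ [_ mu]] := pres _ _ _ mm.
  have Gm : G (phi m) by apply: Gup Gt (mu _ t1 t2).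
  rewrite em (phi_zero zXl zYb) in Gm.
  exact: (filter_no_zero Gf zYl Gm).
have H2K y : H2 y -> K y.
  move=> H2y; have [m mm] := mX a1 y; exists a1, y, m; split; first done; split; first done; split; first done.
  by case: mm => _ [].
move=> h H1h; apply: (H2max K Kf H2K).
have [m mm] := mX h a2; exists h, a2, m; split; first done; split; first done; split; first done.
by case: mm.
Qed.

Definition Hx (G : Y -> Prop) (x z : X) :=
  exists u, bs_le p resX u x /\ bs_le p resX u z /\ G (phi u).

Lemma hat G x : bs_is_ultrafilter q resY G -> G (phi x) ->
  phi_hat p resX phi G (Hx G x).
Proof.
move=> GU Gx.
have [[_ [Gup [Gdir Gpr]]] Gmax] := GU.
have [zX [zXl [zXb pzX]]] := zero_ex HX.
have [zY [zYl [zYb pzY]]] := zero_ex HY.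
have nGz : ~ G zY by exact: (filter_no_zero (proj1 GU) zYl).
have ule u : bs_le p resX u x -> u = resX x (p u) by case.
have Hxf : bs_is_filter p resX (Hx G x).
  split; first by exists x, x; split; [exact: (bsle_refl HX)|split; [exact: (bsle_refl HX)|]].
  split.
    move=> a b [u [ux [ua Gu]]] ab; exists u; split => //; split => //.
    exact: (bsle_trans HX ua ab).
  split.
    move=> a b [u1 [u1x [u1a Gu1]]] [u2 [u2x [u2b Gu2]]].
    pose c := p u1 `&` p u2.
    have cx : c <= p x by apply: leIxl; exact: bsle_p u1x.
    pose u := resX x c.
    have pu : p u = c by rewrite /u p_res.
    have ux : bs_le p resX u x by exact: res_bsle.
    have uu1 : bs_le p resX u u1.
      rewrite (ule _ u1x); apply: bsle_res => //; first by rewrite pu leIl.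
      exact: bsle_p u1x.
    have uu2 : bs_le p resX u u2.
      rewrite (ule _ u2x); apply: bsle_res => //; first by rewrite pu leIr.
      exact: bsle_p u2x.
    have Gu : G (phi u).
      have [t [Gt [t1 t2]]] := Gdir _ _ Gu1 Gu2.
      apply: Gup Gt _.
      rewrite /u phires //; apply: bsle_res => //.
      - exact: (bsle_trans HY t1 (phi_le u1x)).
      - rewrite pb_meet lexI; apply/andP; split.
          by rewrite -qphi; exact: bsle_p t1.
        by rewrite -qphi; exact: bsle_p t2.
      - by rewrite qphi; exact: pb_le.
    exists u; split.
      exists u; split => //; split => //; exact: (bsle_refl HX).
    split; [exact: (bsle_trans HX uu1 u1a)|exact: (bsle_trans HX uu2 u2b)].
  exists zX => [[u [ux [uz Gu]]]].
  have : u = zX by apply: zXb; apply/eqP; rewrite -lex0 -pzX; exact: bsle_p uz.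
  by move=> e; rewrite e (phi_zero zXl zYb) in Gu.
split; last first.
  move=> z [u [ux [uz Gu]]]; apply: Gup Gu _; exact: phi_le.
split => // H' H'f sub z H'z.
have [_ [H'up [H'dir _]]] := H'f.
have H'x : H' x by apply: sub; exists x; split; [exact: (bsle_refl HX)|split; [exact: (bsle_refl HX)|]].
have [c [H'c [cz cx]]] := H'dir _ _ H'z H'x.
case: (classic (G (phi c))) => Gc; first by exists c.
exfalso.
have pcx : p c <= p x by exact: bsle_p cx.
have Gc' : G (phi (resX x (p x `\` p c))).
  rewrite phires ?leBx // pb_diff -qphi.
  apply: (prime HY GU Gx); first by rewrite qphi pb_le.
  by rewrite -phires // -(ule _ cx).
have H'c' : H' (resX x (p x `\` p c)).
  apply: sub; exists (resX x (p x `\` p c)); split; first by apply: (res_bsle HX); exact: leBx.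
  split => //; exact: (bsle_refl HX).
have [t [H't [tc tc']]] := H'dir _ _ H'c H'c'.
have : t = zX.
  apply: zXb; apply/eqP; rewrite -lex0.
  have := meetIB (p c) (p x) (p c); rewrite meetxx => <-.
  rewrite lexI; apply/andP; split; first exact: bsle_p tc.
  by have := bsle_p tc'; rewrite (p_res HX) // leBx.
move=> e; rewrite e in H't; exact: (filter_no_zero H'f zXl H't).
Qed.

Lemma dir2 (mY : has_binary_meets q resY) :
  (forall G : Y -> Prop, bs_is_ultrafilter q resY G ->
     forall H1 H2 : X -> Prop,
       phi_hat p resX phi G H1 -> phi_hat p resX phi G H2 -> H1 = H2) ->
  preserves_binary_meets p resX q resY phi.
Proof.
move=> part x y m mm.
have [w ww] := mY (phi x) (phi y).
suff e : phi m = w by rewrite e.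
have [mx [my mu]] := mm; have [wx [wy wu]] := ww.
have mw : bs_le q resY (phi m) w := wu _ (phi_le mx) (phi_le my).
apply: NNPP => ne.
have ac : q (phi m) <= q w := bsle_p mw.
have gne : q w `\` q (phi m) <> \bot.
  move=> g0; apply: ne; have [_ e] := mw; rewrite e.
  have ca : q w = q (phi m).
    by rewrite -(joinIB (q (phi m)) (q w)) g0 joinx0 (meet_idPr ac).
  by rewrite -ca (res_id HY).
pose w' := resY w (q w `\` q (phi m)).
have pw' : q w' = q w `\` q (phi m) by rewrite /w' (p_res HY) // leBx.
have [G [GU Gw']] := ultra_exists HY (w := w') (ltac:(by rewrite pw')).
have [[_ [Gup [Gdir _]]] _] := GU.
have w'w : bs_le q resY w' w by apply: (res_bsle HY); exact: leBx.
have Gx : G (phi x) by apply: Gup Gw' (bsle_trans HY w'w wx).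
have Gy : G (phi y) by apply: Gup Gw' (bsle_trans HY w'w wy).
have e := part G GU _ _ (hat GU Gx) (hat GU Gy).
have : Hx G x y.
  rewrite e; exists y; split; [exact: (bsle_refl HX)|split; [exact: (bsle_refl HX)|exact: Gy]].
move=> [u [ux [uy Gu]]].
have Gm : G (phi m) by apply: Gup Gu (phi_le (mu u ux uy)).
have [t [Gt [t1 t2]]] := Gdir _ _ Gm Gw'.
have [zY [zYl [zYb pzY]]] := zero_ex HY.
have : t = zY.
  apply: zYb; apply/eqP; rewrite -lex0.
  have := meetIB (q (phi m)) (q w) (q (phi m)); rewrite meetxx => <-.
  by rewrite lexI (bsle_p t1) -pw' (bsle_p t2).
move=> et; rewrite et in Gt; exact: (filter_no_zero (proj1 GU) zYl Gt).
Qed.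
End M.

Theorem proposition3p16 (d1 : Order.disp_t) (B1 : cbDistrLatticeType d1) (X : Type)
  (p : X -> B1) (resX : X -> B1 -> X)
  (d2 : Order.disp_t) (B2 : cbDistrLatticeType d2) (Y : Type) (q : Y -> B2) (resY : Y -> B2 -> Y)
  (phi : X -> Y) (phibar : B1 -> B2) :
  is_boolean_set p resX -> has_binary_meets p resX ->
  is_boolean_set q resY -> has_binary_meets q resY ->
  bs_morphism p resX q resY phi phibar ->
  (preserves_binary_meets p resX q resY phi <->
   forall G : Y -> Prop, bs_is_ultrafilter q resY G ->
     forall H1 H2 : X -> Prop,
       phi_hat p resX phi G H1 -> phi_hat p resX phi G H2 -> H1 = H2).
Proof.
move=> HX mX HY mY Hphi; split.
  move=> pres G GU H1 H2 h1 h2.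
  apply: functional_extensionality => h; apply: propositional_extensionality.
  split.
    exact: (dir1 HX HY Hphi mX pres (proj1 GU) h1 h2).
  exact: (dir1 HX HY Hphi mX pres (proj1 GU) h2 h1).
exact: (dir2 HX HY Hphi mY).
Qed.
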